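(* Let $e_1,e_2,e_3$ be nonzero integers with $e_1+e_2+e_3=0$, and let $a,b,c$ be integers with $e_1a^2+e_2b^2+e_3c^2=0$ and $a+b$, $b+c$, $c+a$ all nonzero. Then, as an identity of rational functions (indeed of polynomials) in $x,y,z$, $$(ax+by+cz)(x+y+z)-\tfrac12(a+b)(b+c)(c+a)\Bigl(\frac{x}{b+c}+\frac{y}{c+a}+\frac{z}{a+b}\Bigr)^2=\tfrac12(e_1a+e_2b+e_3c)\Bigl(\frac{x^2}{e_1}+\frac{y^2}{e_2}+\frac{z^2}{e_3}\Bigr).$$ *)

(* Defs.v *)
From mathcomp Require Import all_boot all_order all_algebra.
Set Implicit Arguments. Unset Strict Implicit. Unset Printing Implicit Defensive.

(* Main.v *)
Require Import Defs.
From mathcomp Require Import all_boot all_order all_algebra.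
From mathcomp Require Import ring.
Import Order.TTheory GRing.Theory Num.Theory.
Local Open Scope ring_scope.

Theorem lemma2p9 (e1 e2 e3 a b c : int)
  (he1 : e1 != 0) (he2 : e2 != 0) (he3 : e3 != 0)
  (hsum : e1 + e2 + e3 = 0)
  (habc : e1 * a ^+ 2 + e2 * b ^+ 2 + e3 * c ^+ 2 = 0)
  (hab : a + b != 0) (hbc : b + c != 0) (hca : c + a != 0) :
  forall x y z : rat,
    (a%:~R * x + b%:~R * y + c%:~R * z) * (x + y + z)
    - 2^-1 * ((a + b)%:~R * (b + c)%:~R * (c + a)%:~R)
      * (x / (b + c)%:~R + y / (c + a)%:~R + z / (a + b)%:~R) ^+ 2
    = 2^-1 * (e1 * a + e2 * b + e3 * c)%:~R
      * (x ^+ 2 / e1%:~R + y ^+ 2 / e2%:~R + z ^+ 2 / e3%:~R).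
Proof.
move=> x y z.
have E3 : e3 = - e1 - e2 by apply: (addrI (e1 + e2)); rewrite hsum; ring.
subst e3.
have Q : (e1%:~R * a%:~R ^+ 2 + e2%:~R * b%:~R ^+ 2 + (- e1 - e2)%:~R * c%:~R ^+ 2 : rat) = 0.
  by rewrite -!rmorphXn -!rmorphM -!rmorphD habc.
have n1 : (e1%:~R : rat) != 0 by rewrite intr_eq0.
have n2 : (e2%:~R : rat) != 0 by rewrite intr_eq0.
have n3 : ((- e1 - e2)%:~R : rat) != 0 by rewrite intr_eq0.
have nab : ((a+b)%:~R : rat) != 0 by rewrite intr_eq0.
have nbc : ((b+c)%:~R : rat) != 0 by rewrite intr_eq0.
have nca : ((c+a)%:~R : rat) != 0 by rewrite intr_eq0.
move: n1 n2 n3 nab nbc nca Q.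
rewrite !rmorphD !rmorphN !rmorphM /=.
set E1 := (e1%:~R : rat); set E2 := (e2%:~R : rat).
set A := (a%:~R : rat); set B := (b%:~R : rat); set C := (c%:~R : rat).
move=> n1 n2 n3 nab nbc nca Q.
apply/eqP; rewrite -subr_eq0; apply/eqP.
transitivity (- (E1 * A ^+ 2 + E2 * B ^+ 2 + (- E1 - E2) * C ^+ 2) / 2 *
  (x ^+ 2 / (E1 * (B + C)) + y ^+ 2 / (E2 * (C + A)) + z ^+ 2 / ((- E1 - E2) * (A + B)))).
  by field; rewrite ?n1 ?n2 ?n3 ?nab ?nbc ?nca.
by rewrite Q oppr0 !mul0r.
Qed.
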